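(* Let $n \ge 2k + 1 \ge 5$ and let $Q$ be an independent set in $K(n,k)$. If we uniquely expand $$|Q| = \binom{q_{n-k}}{n-k} + \binom{q_{n-k-1}}{n-k-1} + \cdots + \binom{q_j}{j},$$ where $q_{n-k} > q_{n-k-1} > \ldots > q_j \ge j \ge 1$ are natural numbers, then $$|N(Q)| \ge \binom{q_{n-k}}{k} + \binom{q_{n-k-1}}{k-1} + \cdots + \binom{q_j}{j-(n-2k)}.$$
   Context: The Kneser graph $K(n,k)$ has as vertices the $k$-element subsets of $[n]=\{1,\dots,n\}$, two vertices being adjacent iff they are disjoint. For a set $Q$ of vertices of a graph, the neighborhood $N(Q)$ is the set of vertices not in $Q$ that are adjacent to at least one vertex of $Q$. In the bound, the $i$-th term is $\binom{q_i}{i-(n-2k)}$ for $i=n-k,n-k-1,\dots,j$; binomial coefficients with negative lower index are $0$. *)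

(* Defs.v *)
From mathcomp Require Import all_boot.
Set Implicit Arguments. Unset Strict Implicit. Unset Printing Implicit Defensive.

Definition kvertex (n k : nat) (A : {set 'I_n}) : bool := #|A| == k.

Definition kadj (n : nat) (A B : {set 'I_n}) : bool := [disjoint A & B].

Definition kvertices (n k : nat) (Q : {set {set 'I_n}}) : Prop :=
  forall A, A \in Q -> kvertex k A.

Definition kindependent (n : nat) (Q : {set {set 'I_n}}) : Prop :=
  forall A B, A \in Q -> B \in Q -> ~~ kadj A B.

Definition kneighborhood (n k : nat) (Q : {set {set 'I_n}}) : {set {set 'I_n}} :=
  [set B : {set 'I_n} | [&& kvertex k B, B \notin Q & [exists A in Q, kadj A B]]].

(* binomial coefficient with possibly negative lower index m - s
   (lower index given as the formal difference m - s of naturals): 0 if m < s *)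
Definition binom_shift (q m s : nat) : nat := if m < s then 0 else 'C(q, m - s).

(* Main.v *)
Require Import Defs.
From mathcomp Require Import all_boot.
From mathcomp Require Import zify.
Set Implicit Arguments. Unset Strict Implicit. Unset Printing Implicit Defensive.

Section Shift.
Variable n : nat.
Implicit Types (A B C : {set 'I_n}) (E F G : {set {set 'I_n}}).

Definition shadow E : {set {set 'I_n}} :=
  [set B : {set 'I_n} | [exists x : 'I_n, (x \notin B) && (x |: B \in E)]].

Lemma shadowP E B : reflect (exists2 x, x \notin B & x |: B \in E) (B \in shadow E).
Proof.
rewrite inE; apply: (iffP existsP) => [[x /andP[]]|[x h1 h2]]; first by exists x.
by exists x; rewrite h1.
Qed.

Variables i j : 'I_n.
Hypothesis ij : i != j.

Definition sw A := i |: (A :\ j).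
Definition usw A := j |: (A :\ i).
Definition mov A := (j \in A) && (i \notin A).
Definition umov A := (i \in A) && (j \notin A).
Definition sh1 E A := if mov A && (sw A \notin E) then sw A else A.
Definition shF E := [set sh1 E A | A in E].

Lemma uswK A : mov A -> usw (sw A) = A.
Proof.
case/andP=> jA iA; apply/setP=> x; rewrite !inE.
case: (eqVneq x j) => [->|xj]; first by rewrite jA.
case: (eqVneq x i) => [->|xi] /=; first by rewrite (negbTE iA) ?(negbTE ij) 1?eq_sym ?(negbTE ij).
done.
Qed.

Lemma swK A : umov A -> sw (usw A) = A.
Proof.
case/andP=> iA jA; apply/setP=> x; rewrite !inE.
case: (eqVneq x i) => [->|xi]; first by rewrite iA.
case: (eqVneq x j) => [->|xj] /=; first by rewrite (negbTE jA).
done.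
Qed.

Lemma umov_sw A : mov A -> umov (sw A).
Proof. by case/andP=> jA iA; rewrite /umov /sw !inE eqxx /= eqxx eq_sym (negbTE ij). Qed.

Lemma mov_usw A : umov A -> mov (usw A).
Proof. by case/andP=> iA jA; rewrite /mov /usw !inE eqxx /= eqxx (negbTE ij). Qed.


Lemma sh1_inj E : {in E &, injective (sh1 E)}.
Proof.
move=> A B AE BE; rewrite /sh1.
case: ifP => [/andP[mA nA]|_]; case: ifP => [/andP[mB nB]|_] //.
- by move=> h; rewrite -(uswK mA) -(uswK mB) h.
- by move=> h; rewrite h BE in nA.
- by move=> h; rewrite -h AE in nB.
Qed.

Lemma card_shF E : #|shF E| = #|E|.
Proof. by rewrite card_in_imset //; apply: sh1_inj. Qed.

Lemma shF_keep E B : B \in E -> (mov B -> sw B \in E) -> B \in shF E.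
Proof.
move=> BE h; apply/imsetP; exists B => //; rewrite /sh1.
by case: ifP => // /andP[/h ->].
Qed.

Lemma shF_new E B : umov B -> usw B \in E -> B \in shF E.
Proof.
move=> uB uE; case BE: (B \in E).
  apply: shF_keep => // /andP[jB _]; by case/andP: uB => _ /negP.
apply/imsetP; exists (usw B) => //; rewrite /sh1 mov_usw // swK // BE /=.
by [].
Qed.

Lemma shF_inv E B : B \in shF E -> B \in E \/ (umov B /\ usw B \in E).
Proof.
case/imsetP=> A AE ->; rewrite /sh1; case: ifP => [/andP[mA _]|_]; last by left.
by right; rewrite uswK // umov_sw.
Qed.

Lemma shF_mov E B : B \in shF E -> mov B -> B \in E /\ sw B \in E.
Proof.
case/imsetP=> A AE ->; rewrite /sh1; case: ifP => [/andP[mA _]|].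
  by move/andP=> [_]; rewrite /sw !inE eqxx.
by move=> h mA; rewrite mA /= in h; split => //; move/negbFE: h.
Qed.

Lemma shadow_shF E : shadow (shF E) \subset shF (shadow E).
Proof.
apply/subsetP=> G /shadowP[x xG]; set H := x |: G => HS.
case mG: (mov G).
  have /andP[jG iG] := mG.
  apply: shF_keep.
  - case: (eqVneq x i) => [xi|xi].
      case: (shF_inv HS) => [HE|[/andP[_]]]; last by rewrite /H !inE jG orbT.
      by apply/shadowP; exists x.
    have mH : mov H by rewrite /mov /H !inE jG orbT /= negb_or eq_sym xi.
    by case: (shF_mov HS mH) => HE _; apply/shadowP; exists x.
  move=> _; case: (eqVneq x i) => [xi|xi].
    case: (shF_inv HS) => [HE|[/andP[_]]]; last by rewrite /H !inE jG orbT.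
    apply/shadowP; exists j; first by rewrite /sw !inE eqxx eq_sym (negbTE ij).
    suff -> : j |: sw G = H by [].
    apply/setP=> y; rewrite /sw /H xi !inE; case: (eqVneq y j) => [->|//].
    by rewrite jG !orbT.
  have mH : mov H by rewrite /mov /H !inE jG orbT /= negb_or eq_sym xi.
  case: (shF_mov HS mH) => _ sH; apply/shadowP; exists x.
    by rewrite /sw !inE negb_or xi /= (negbTE xG) andbF.
  suff -> : x |: sw G = sw H by [].
  have xj : x != j by apply: contraNneq xG => ->.
  apply/setP=> y; rewrite /sw /H !inE; case: (eqVneq y x) => [->|//].
  by rewrite xj !orbT.
case: (shF_inv HS) => [HE|[uH uE]].
  by apply: shF_keep => [|mG']; [apply/shadowP; exists x| rewrite mG' in mG].
have /andP[iH jH] := uH.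
case: (eqVneq x i) => [xi|xi].
  apply: shF_keep => [|mG']; last by rewrite mG' in mG.
  apply/shadowP; exists j; first by apply: contra jH; rewrite !inE orbC => ->.
  suff -> : j |: G = usw H by [].
  apply/setP=> y; rewrite /usw /H xi !inE; case: (eqVneq y i) => [->|//] /=.
  by rewrite -xi (negbTE xG).
have iG : i \in G by move: iH; rewrite !inE => /orP[/eqP e|//]; rewrite e eqxx in xi.
have jG : j \notin G by apply: contra jH; rewrite !inE orbC => ->.
apply: shF_new; first by rewrite /umov iG jG.
have xj : x != j by apply: contraNneq jH => <-; rewrite !inE eqxx.
apply/shadowP; exists x.
  by rewrite /usw !inE negb_or xj /= negb_and xG orbT.
suff -> : x |: usw G = usw H by [].
apply/setP=> y; rewrite /usw /H !inE; case: (eqVneq y x) => [->|//].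
by rewrite xi !orbT.
Qed.

Lemma card_shadow_shF E : #|shadow (shF E)| <= #|shadow E|.
Proof. by rewrite -(card_shF (shadow E)); apply: subset_leq_card; apply: shadow_shF. Qed.

Lemma card_sh1 E A : #|sh1 E A| = #|A|.
Proof.
rewrite /sh1; case: ifP => // /andP[/andP[jA iA] _].
rewrite /sw cardsU1 !inE (negbTE iA) andbF /=.
by rewrite (cardsD1 j A) jA.
Qed.

End Shift.

Section Weight.
Variable n : nat.
Implicit Types (A B C : {set 'I_n}) (E F G : {set {set 'I_n}}).

Definition wt A := \sum_(x in A) (x : nat).
Definition Wt E := \sum_(A in E) wt A.

Lemma wt_sw (i j : 'I_n) A : i != j -> mov i j A -> wt (sw i j A) + j = wt A + i.
Proof.
move=> ij /andP[jA iA]; rewrite /wt /sw big_setU1 /=; last by rewrite !inE (negbTE iA) andbF.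
rewrite [in RHS](big_setD1 j jA) /=; move: (\sum_(i0 in A :\ j) (i0 : nat)) => s; lia.
Qed.

Lemma Wt_shF (i j : 'I_n) E : i < j -> shF i j E != E -> Wt (shF i j E) < Wt E.
Proof.
move=> lij nE; have ij : i != j by rewrite neq_ltn lij.
have [A0 A0E nA0] : exists2 A0, A0 \in E & sh1 i j E A0 != A0.
  apply/exists_inP; apply: contraR nE; rewrite negb_exists_in => /forall_inP h.
  apply/eqP; rewrite -[RHS]imset_id; apply: eq_in_imset => A /h /negPn /eqP //.
have le B : wt (sh1 i j E B) <= wt B.
  rewrite /sh1; case: ifP => // /andP[mB _]; have := wt_sw ij mB; lia.
have lt : wt (sh1 i j E A0) < wt A0.
  move: nA0; rewrite /sh1; case: ifP => [/andP[mA _] _|]; last by rewrite eqxx.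
  have := wt_sw ij mA; lia.
rewrite /Wt /shF big_imset /=; last exact: sh1_inj.
rewrite (bigD1 A0) // [X in _ < X](bigD1 A0) //=.
have : \sum_(A in E | A != A0) wt (sh1 i j E A) <= \sum_(A in E | A != A0) wt A.
  by apply: leq_sum => A _; exact: le.
move=> h; rewrite -addSn; exact: leq_add lt h. Qed.

Definition shifted E := forall A (x y : 'I_n), A \in E -> x \in A -> y \notin A ->
  y < x -> y |: (A :\ x) \in E.

Definition Punif t E := [forall A in E, #|A| == t].

Lemma exists_shifted t F : Punif t F -> exists G,
  [/\ Punif t G, #|G| = #|F|, #|shadow G| <= #|shadow F| & shifted G].
Proof.
move=> uF.
pose P G := [&& Punif t G, #|G| == #|F| & #|shadow G| <= #|shadow F|].
have PF : P F by rewrite /P uF eqxx leqnn.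
case: (arg_minnP Wt PF) => G /and3P[uG /eqP cG sG] minG.
exists G; split => // A x y AG xA yA yx.
apply/negPn/negP => nG.
have ij : y != x by rewrite neq_ltn yx.
have PS : P (shF y x G).
  apply/and3P; split.
  - apply/forall_inP => B /imsetP[A' A'G ->]; rewrite card_sh1.
    by move/forall_inP: uG => /(_ _ A'G).
  - by rewrite card_shF cG.
  - exact: leq_trans (card_shadow_shF ij _) sG.
have ne : shF y x G != G.
  have inS : y |: (A :\ x) \in shF y x G.
    apply/imsetP; exists A => //; rewrite /sh1 /mov xA yA /=.
    by rewrite /sw nG.
  by apply/negP=> /eqP e; rewrite e in inS; rewrite inS in nG.
have := minG _ PS; have := Wt_shF yx ne; lia.
Qed.

End Weight.
Section Arith.

Definition valid t j (a : nat -> nat) :=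
  [/\ 0 < j, j <= t, j <= a j & forall i, j <= i < t -> a i < a i.+1].

Lemma valid_ge t j a : valid t j a -> forall i, j <= i <= t -> i <= a i.
Proof.
case=> _ _ ja inc; elim=> [//|i IH] hi.
case: (eqVneq j i.+1) => [<-//|nji].
have h1 : j <= i <= t by move: hi nji; clear; lia.
have h2 : j <= i < t by move: hi nji; clear; lia.
have := IH h1; have := inc i h2; clear; lia.
Qed.

Lemma sum_pos t j a : valid t j a -> 0 < \sum_(j <= i < t.+1) 'C(a i, i).
Proof.
case=> _ jt ja _; rewrite big_ltn ?ltnS // addn_gt0 bin_gt0 ja //.
Qed.

Definition KKprop t M S := forall j b, valid t j b -> \sum_(j <= i < t.+1) 'C(b i, i) <= M ->
      \sum_(j <= i < t.+1) 'C(b i, i.-1) <= S.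

Lemma rtrick_gt t M S j a : KKprop t M S -> valid t j a -> j < a j ->
  (\sum_(j <= i < t.+1) 'C((a i).-1, i)).+1 <= M ->
  \sum_(j <= i < t.+1) 'C((a i).-1, i.-1) + j.-1 <= S.
Proof.
move=> H va gt hX; have [j0 jt ja inc] := va.
have ai1 : forall i, j <= i <= t -> 0 < a i.
  by move=> i hi; have := valid_ge va hi; move: hi j0; clear; lia.
case: (eqVneq j 1) => [ej1|nj1].
  subst j; rewrite addn0.
  apply: H; last by apply: leq_trans hX.
  split=> //; first by move: gt; clear; lia.
  move=> i hi; have := inc i hi; have hi' : 1 <= i <= t by move: hi; clear; lia.
  have := ai1 i hi'; clear; lia.
pose b i := if i == j.-1 then j.-1 else (a i).-1.
have jj : j.-1.+1 = j by move: j0; clear; lia.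
have eqb : forall F : nat -> nat -> nat,
    \sum_(j.-1 <= i < t.+1) F (b i) i = F j.-1 j.-1 + \sum_(j <= i < t.+1) F (a i).-1 i.
  move=> F; rewrite big_ltn; last by move: jt; clear; lia.
  rewrite /b eqxx jj; congr (_ + _); apply: eq_big_nat => i hi.
  by have -> : (i == j.-1) = false by move: hi j0; clear; lia.
have := H j.-1 b; rewrite (eqb (fun x i => 'C(x, i))) (eqb (fun x i => 'C(x, i.-1))) /=.
have -> : 'C(j.-1, j.-1.-1) = j.-1.
  by case: j j0 nj1 {va jt ja inc gt ai1 jj eqb hX b} => [|[|m]] //= _ _; rewrite binSn.
rewrite binn addnC [_ + j.-1]addnC; apply; last by rewrite addn1.
split.
- by move: j0 nj1; clear; lia.
- by move: jt; clear; lia.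
- by rewrite /b eqxx.
- move=> i hi; rewrite /b.
  case: (eqVneq i j.-1) => [->|ne].
    rewrite jj; have -> : (j == j.-1) = false by move: j0; clear; lia.
    by move: gt; clear; lia.
  have -> : (i.+1 == j.-1) = false by move: hi ne; clear; lia.
  have hi' : j <= i < t by move: hi ne; clear; lia.
  have hi'' : j <= i <= t by move: hi'; clear; lia.
  have := inc i hi'; have := ai1 i hi''; clear; lia.
Qed.

Lemma rtrick t M S : KKprop t M S ->
  forall j a, valid t j a -> (\sum_(j <= i < t.+1) 'C((a i).-1, i)).+1 <= M ->
     \sum_(j <= i < t.+1) 'C((a i).-1, i.-1) + j.-1 <= S.
Proof.
move=> H j a; move: {2}(t - j) (leqnn (t - j)) => d.
elim: d j => [|d IHd] j hd va hX; have [j0 jt ja inc] := va;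
  (case: (ltngtP (a j) j) => [|gt|eq]; first by rewrite ltnNge ja);
  try exact: rtrick_gt H va gt hX.
- have ejt : j = t by move: hd jt; clear; lia.
  subst j.
  move: hX; rewrite !big_nat1 => hX.
  have := H t (fun _ => t); rewrite !big_nat1 binn.
  move=> /(_ _ _)/Wrap[]; first by split=> // i; clear; lia.
    by move: hX; clear; lia.
  rewrite eq; case: t j0 {H hd jt ja inc hX eq va} => // t _ /=.
  by rewrite binSn binn; clear; lia.
- case: (eqVneq j t) => [ejt|njt].
    subst j.
    move: hX; rewrite !big_nat1 => hX.
    have := H t (fun _ => t); rewrite !big_nat1 binn.
    move=> /(_ _ _)/Wrap[]; first by split=> // i; clear; lia.
      by move: hX; clear; lia.
    rewrite eq; case: t j0 {H hd jt ja inc hX eq va IHd} => // t _ /=.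
    by rewrite binSn binn; clear; lia.
  have jt' : j < t by move: jt njt; clear; lia.
  have va' : valid t j.+1 a.
    split=> //; first by have := inc j; rewrite leqnn jt' eq; move=> /(_ isT).
    by move=> i hi; apply: inc; move: hi; clear; lia.
  move: hX; rewrite big_ltn ?ltnS // eq.
  have -> : 'C(j.-1, j) = 0 by rewrite bin_small //; move: j0; clear; lia.
  rewrite add0n => hX.
  have hd' : t - j.+1 <= d by move: hd; clear; lia.
  have h := IHd j.+1 hd' va' hX.
  rewrite [X in X + _ <= _]big_ltn ?ltnS // eq binn.
  by move: h j0; clear; lia.
Qed.

End Arith.
Section KKshifted.
Variable n : nat.
Implicit Types (A B C : {set 'I_n}) (E F G : {set {set 'I_n}}).

Definition above p F := forall A (x : 'I_n), A \in F -> x \in A -> p <= x.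
Definition shiftedp p F := forall A (x y : 'I_n), A \in F -> x \in A -> y \notin A ->
  p <= y -> y < x -> y |: (A :\ x) \in F.
Definition unif t F := forall A, A \in F -> #|A| = t.

Definition Fin (x : 'I_n) F := [set B : {set 'I_n} | (x \notin B) && (x |: B \in F)].
Definition Fout (x : 'I_n) F := [set A in F | x \notin A].

Lemma card_split x F : #|F| = #|Fin x F| + #|Fout x F|.
Proof.
rewrite -(cardsID [set A : {set 'I_n} | x \in A] F); congr (_ + _).
  have -> : F :&: [set A : {set 'I_n} | x \in A] = [set x |: B | B in Fin x F].
    apply/setP=> A; rewrite !inE; apply/andP/imsetP.
      case=> AF xA; exists (A :\ x); first by rewrite !inE eqxx /= setD1K.
      by rewrite setD1K.
    case=> B; rewrite inE => /andP[xB BF] ->; by rewrite setU11.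
  rewrite card_in_imset // => B C; rewrite !inE => /andP[xB _] /andP[xC _] e.
  by rewrite -(setU1K xB) -(setU1K xC) e.
by apply: eq_card => A; rewrite !inE andbC.
Qed.

Lemma shadow_split x F : #|Fin x F| + #|shadow (Fin x F)| <= #|shadow F|.
Proof.
set S2 := [set x |: B | B in shadow (Fin x F)].
have cS2 : #|S2| = #|shadow (Fin x F)|.
  rewrite card_in_imset // => B C /shadowP[y yB] ; rewrite inE => /andP[xB _].
  move=> /shadowP[z zC]; rewrite inE => /andP[xC _] e.
  have xB' : x \notin B by apply: contra xB; rewrite !inE orbC => ->.
  have xC' : x \notin C by apply: contra xC; rewrite !inE orbC => ->.
  by rewrite -(setU1K xB') -(setU1K xC') e.
have dis : Fin x F :&: S2 = set0.
  apply/setP=> A; rewrite !inE; apply/negP=> /andP[/andP[xA _] /imsetP[B _ e]].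
  by rewrite e setU11 in xA.
rewrite -cS2 -cardsUI dis cards0 addn0; apply: subset_leq_card.
apply/subsetP=> A; rewrite inE => /orP[|/imsetP[B /shadowP[y yB] ]].
  by rewrite inE => /andP[xA AF]; apply/shadowP; exists x.
rewrite inE => /andP[xyB yBF] ->; apply/shadowP; exists y.
  by rewrite !inE negb_or yB andbT; apply: contraNneq xyB => ->; rewrite setU11.
by rewrite setUCA.
Qed.

Lemma shadow_out p F (x : 'I_n) : above p F -> shiftedp p F -> x = p :> nat ->
  shadow (Fout x F) \subset Fin x F.
Proof.
move=> ab sh xp; apply/subsetP=> B /shadowP[y yB]; rewrite inE => /andP[yBF xyB].
have xy : x != y by apply: contraNneq xyB => ->; rewrite setU11.
have xB : x \notin B by apply: contra xyB; rewrite !inE orbC => ->.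
rewrite inE xB /=.
have := sh _ y x yBF (setU11 _ _) xyB; rewrite xp leqnn.
have py : p <= y by exact: ab _ _ yBF (setU11 _ _).
have pl : p < y.
  rewrite ltn_neqAle py andbT; apply: contra xy => /eqP e; apply/eqP/val_inj; rewrite /= xp.
  by rewrite e.
move=> /(_ isT pl); congr (_ \in F); apply/setP=> z; rewrite !inE.
case: (eqVneq z y) => [->|zy] /=; last by [].
by rewrite eq_sym (negbTE xy) (negbTE yB).
Qed.

Lemma Fin_props p t F (x : 'I_n) : above p F -> shiftedp p F -> unif t F -> x = p :> nat ->
  [/\ above p.+1 (Fin x F), shiftedp p.+1 (Fin x F) & unif t.-1 (Fin x F)].
Proof.
move=> ab sh un xp; split.
- move=> A y; rewrite inE => /andP[xA AF] yA.
  have := ab _ y AF; rewrite !inE yA orbT => /(_ isT).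
  rewrite leq_eqVlt => /orP[/eqP e|//]; exfalso; move: xA; rewrite (_ : x = y) ?yA //.
  by apply/val_inj; rewrite /= xp.
- move=> A u v; rewrite inE => /andP[xA AF] uA vA pv vu; rewrite inE.
  have xv : x != v by apply/negP=> /eqP e; move: pv; rewrite -e xp ltnn.
  have xu : x != u by apply: contraNneq xA => ->.
  apply/andP; split.
    by rewrite !inE negb_or xv /= negb_and negbK xA orbT.
  have := sh _ u v AF; rewrite !inE uA orbT negb_or (eq_sym v x) xv vA => /(_ isT isT).
  have -> : p <= v by move: pv; clear; lia.
  move=> /(_ isT vu); congr (_ \in F); apply/setP=> z; rewrite !inE.
  case: (eqVneq z x) => [->|zx] /=; first by rewrite xu orbT.
  by [].
- move=> A; rewrite inE => /andP[xA AF]; have := un _ AF.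
  by rewrite cardsU1 xA /= add1n => <-.
Qed.

Lemma Fout_props p t F (x : 'I_n) : above p F -> shiftedp p F -> unif t F -> x = p :> nat ->
  [/\ above p.+1 (Fout x F), shiftedp p.+1 (Fout x F) & unif t (Fout x F)].
Proof.
move=> ab sh un xp; split.
- move=> A y; rewrite inE => /andP[AF xA] yA.
  have := ab _ y AF yA; rewrite leq_eqVlt => /orP[/eqP e|//]; exfalso; move: xA.
  by rewrite (_ : x = y) ?yA //; apply/val_inj; rewrite /= xp.
- move=> A u v; rewrite inE => /andP[AF xA] uA vA pv vu; rewrite inE.
  have xv : x != v by apply/negP=> /eqP e; move: pv; rewrite -e xp ltnn.
  rewrite sh //; last by move: pv; clear; lia.
  by rewrite !inE negb_or xv /= negb_and xA orbT.
- by move=> A; rewrite inE => /andP[AF _]; apply: un.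
Qed.

End KKshifted.

Lemma reidx (f : nat -> nat) m k : 0 < m ->
  \sum_(m <= i < k.+1) f i = \sum_(m.-1 <= i < k) f i.+1.
Proof. by move=> m0; rewrite -{1}(prednK m0) big_add1. Qed.

Lemma subrange (f : nat -> nat) j j2 k : j <= j2 -> j2 <= k ->
  \sum_(j2 <= i < k) f i <= \sum_(j <= i < k) f i.
Proof. by move=> h1 h2; rewrite [X in _ <= X](big_cat_nat h1 h2) /= leq_addl. Qed.

Section KKmain.
Variable n : nat.
Implicit Types (A B C : {set 'I_n}) (E F G : {set {set 'I_n}}).

Lemma above_empty p t F : above p F -> n <= p -> unif t.+1 F -> #|F| = 0.
Proof.
move=> ab np un; apply/eqP; rewrite cards_eq0; apply/eqP/setP => A; rewrite inE.
apply/negP => AF; have := un A AF.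
have -> : A = set0.
  apply/setP=> x; rewrite inE; apply/negP=> xA; have := ab A x AF xA.
  have := ltn_ord x; move: np; clear; lia.
by rewrite cards0.
Qed.

Lemma KKs t : forall p F, above p F -> shiftedp p F -> unif t F ->
  KKprop t #|F| #|shadow F|.
Proof.
elim: t => [|t IHt] p F.
  by move=> _ _ _ j b [j0 jt]; move: j0 jt; clear; lia.
move: {2}(n - p) (leqnn (n - p)) => d.
elim: d p F => [|d IHd] p F hd ab sh un j a va hF.
  exfalso; have := sum_pos va; rewrite (above_empty ab _ un) in hF.
    by move: hF; clear; lia.
  by move: hd; clear; lia.
case: (ltnP p n) => [pn|np]; last first.
  exfalso; have := sum_pos va; rewrite (above_empty ab np un) in hF.
  by move: hF; clear; lia.
pose x := Ordinal pn; have xp : x = p :> nat by [].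
have [abI shI unI] := Fin_props ab sh un xp.
have [abO shO unO] := Fout_props ab sh un xp.
have cF := card_split x F; have sS := shadow_split x F.
have sO := subset_leq_card (shadow_out ab sh xp).
have [j0 jt ja inc] := va.
have ai1 : forall i, j <= i <= t.+1 -> 0 < a i.
  by move=> i hi; have := valid_ge va hi; move: hi j0; clear; lia.
set Y := \sum_(j <= i < t.+2) 'C((a i).-1, i.-1).
set X := \sum_(j <= i < t.+2) 'C((a i).-1, i).
have pas1 : \sum_(j <= i < t.+2) 'C(a i, i) = X + Y.
  rewrite /X /Y -big_split /=; apply: eq_big_nat => i hi.
  have hi' : j <= i <= t.+1 by move: hi; clear; lia.
  have := ai1 i hi'; have : 0 < i by move: hi j0; clear; lia.
  case: i {hi hi'} => // i _; case: (a i.+1) => // m _ /=; exact: binS.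
case: (leqP Y #|Fin x F|) => hY; last first.
  exfalso.
  have hO : X.+1 <= #|Fout x F| by move: hF hY; rewrite pas1 cF; clear; lia.
  have := rtrick (IHd p.+1 (Fout x F) _ abO shO unO) va hO.
  have hd' : n - p.+1 <= d by move: hd; clear; lia.
  rewrite -/Y => /(_ hd') h; by have := leq_ltn_trans (leq_trans (leq_addr _ _) (leq_trans h sO)) hY; rewrite ltnn.
pose g i := if i <= 1 then 0 else 'C((a i).-1, i.-2).
have pas2 : \sum_(j <= i < t.+2) 'C(a i, i.-1) = Y + \sum_(j <= i < t.+2) g i.
  rewrite /Y -big_split /=; apply: eq_big_nat => i hi.
  have hi' : j <= i <= t.+1 by move: hi; clear; lia.
  have := ai1 i hi'; have : 0 < i by move: hi j0; clear; lia.
  rewrite /g; case: i {hi hi'} => // [[|i]] _ /=.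
    by case: (a 1) => // m _; rewrite !bin0.
  by case: (a i.+2) => // m _ /=; rewrite binS.
have hg : \sum_(j <= i < t.+2) g i <= #|shadow (Fin x F)|.
  case: (posnP t) => [t0|tpos].
    subst t; rewrite big_nat_cond big1 // => i /andP[/andP[_ hi] _].
    by rewrite /g; have -> : i <= 1 by move: hi; clear; lia.
  set j2 := maxn j 2.
  have jj2 : j <= j2 by apply: leq_maxl.
  have j2t : j2 <= t.+2 by rewrite /j2 geq_max; move: jt tpos; clear; lia.
  rewrite (big_cat_nat jj2 j2t) /=.
  rewrite big_nat_cond big1 ?add0n; last first.
    move=> i /andP[/andP[hi1 hi2] _]; rewrite /g.
    have -> : i <= 1 by move: hi1 hi2; rewrite /j2; clear; lia.
    by [].
  have j2p : 0 < j2 by rewrite /j2; clear; lia.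
  rewrite reidx //.
  have -> : \sum_(j2.-1 <= i < t.+1) g i.+1 =
            \sum_(j2.-1 <= i < t.+1) 'C((a i.+1).-1, i.-1).
    apply: eq_big_nat => i hi; rewrite /g.
    have -> : (i.+1 <= 1) = false by move: hi; rewrite /j2; clear; lia.
    by [].
  apply: (IHt p.+1 (Fin x F) abI shI unI (j2.-1) (fun i => (a i.+1).-1)).
    have h2 : j <= j2 <= t.+1 by rewrite jj2 /=; rewrite /j2 geq_max; move: jt tpos; clear; lia.
    split.
    - by rewrite /j2; clear; lia.
    - by move: h2; clear; lia.
    - have := valid_ge va h2; rewrite prednK //; clear; lia.
    - move=> i hi.
      have h1 : j <= i.+1 < t.+1 by move: hi; rewrite /j2; clear; lia.
      have h3 : j <= i.+1 <= t.+1 by move: hi; rewrite /j2; clear; lia.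
      have := inc _ h1; have := ai1 _ h3; clear; lia.
  rewrite (_ : \sum_(j2.-1 <= i < t.+1) 'C((a i.+1).-1, i) = \sum_(j2 <= i < t.+2) 'C((a i).-1, i.-1)); last by rewrite [RHS]reidx.
  apply: leq_trans hY; exact: subrange.
rewrite pas2; apply: leq_trans sS; exact: leq_add.
Qed.

End KKmain.

Lemma reidx2 (f : nat -> nat) m k s :
  \sum_(m <= i < k) f (i + s) = \sum_(m + s <= i < k + s) f i.
Proof. by rewrite big_addn addnK. Qed.

Section Final.
Variable n : nat.
Implicit Types (A B C : {set 'I_n}) (E F G : {set {set 'I_n}}).

Lemma KK t F : unif t F -> KKprop t #|F| #|shadow F|.
Proof.
move=> un.
have uF : Punif t F by apply/forall_inP => A /un ->.
have [G [uG cG sG shG]] := exists_shifted uF.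
move=> j b vb hb; apply: leq_trans sG.
apply: (KKs (p := 0)) => //.
- by move=> A x y AG xA yA _; apply: shG.
- by move=> A AG; move/forall_inP: uG => /(_ _ AG) /eqP.
- by rewrite cG.
Qed.

Definition Dk k G := [set B : {set 'I_n} | (#|B| == k) && [exists C in G, B \subset C]].

Lemma Dk_unif m G : unif m (Dk m G).
Proof. by move=> B; rewrite inE => /andP[/eqP]. Qed.

Lemma Dk_top t G : unif t G -> G \subset Dk t G.
Proof.
move=> un; apply/subsetP=> A AG; rewrite inE un // eqxx /=.
by apply/exists_inP; exists A.
Qed.

Lemma Dk_sub m G : shadow (Dk m.+1 G) \subset Dk m G.
Proof.
apply/subsetP=> B /shadowP[x xB]; rewrite !inE cardsU1 xB add1n eqSS.
case/andP=> -> /exists_inP[C CG BC] /=; apply/exists_inP; exists C => //.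
by apply: subset_trans BC; apply: subsetUr.
Qed.

Lemma iter_bound t G j q : unif t G -> valid t j q ->
  #|G| = \sum_(j <= i < t.+1) 'C(q i, i) ->
  forall s, s <= t -> \sum_(j <= i < t.+1) binom_shift (q i) i s <= #|Dk (t - s) G|.
Proof.
move=> un vq cG; have [j0 jt jq inc] := vq.
elim=> [|s IH] st.
  rewrite subn0; apply: leq_trans (subset_leq_card (Dk_top un)).
  rewrite cG; apply: eq_leq; apply: eq_big_nat => i _.
  by rewrite /binom_shift ltn0 subn0.
have IH' := IH (ltnW st).
set H := Dk (t - s) G.
have uH : unif (t - s) H by apply: Dk_unif.
have ts : t - s = (t - s.+1).+1 by move: st; clear; lia.
have sub : #|shadow H| <= #|Dk (t - s.+1) G|.
  rewrite /H ts; apply: subset_leq_card; apply: Dk_sub.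
set j1 := maxn j s.+1.
have jj1 : j <= j1 by apply: leq_maxl.
have j1t : j1 <= t by rewrite geq_max jt st.
have hK := KK uH (j := j1 - s) (b := fun i => q (i + s)).
have e1 : forall f : nat -> nat,
    \sum_(j1 - s <= i < (t - s).+1) f (i + s) = \sum_(j1 <= i < t.+1) f i.
  move=> f; rewrite reidx2; congr (\sum_(_ <= i < _) _); first by rewrite subnK // /j1; clear; lia.
  by move: st; clear; lia.
have E1 : \sum_(j1 - s <= i < (t - s).+1) 'C(q (i + s), i) = \sum_(j1 <= i < t.+1) 'C(q i, i - s).
  by rewrite -(e1 (fun i => 'C(q i, i - s))); apply: eq_big_nat => i _; rewrite addnK.
have E2 : \sum_(j1 - s <= i < (t - s).+1) 'C(q (i + s), i.-1) = \sum_(j1 <= i < t.+1) 'C(q i, (i - s).-1).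
  by rewrite -(e1 (fun i => 'C(q i, (i - s).-1))); apply: eq_big_nat => i _; rewrite addnK.
have := hK; rewrite E1 E2.
move=> /(_ _ _)/Wrap[].
- split.
  + by rewrite /j1; clear; lia.
  + by move: j1t; clear; lia.
  + rewrite subnK; last by rewrite /j1; clear; lia.
    have := valid_ge vq (introT andP (conj jj1 j1t)); move: j1t; clear; lia.
  + move=> i hi; have := inc (i + s); rewrite addSn; apply.
    by move: hi jj1; rewrite /j1; clear; lia.
- apply: leq_trans IH'; apply: leq_trans (subrange _ jj1 (leqW j1t)).
  apply: eq_leq; apply: eq_big_nat => i hi; rewrite /binom_shift.
  by have -> : (i < s) = false by move: hi; rewrite /j1; clear; lia.
- move=> h; apply: (leq_trans _ sub); apply: (leq_trans _ h).
  rewrite (big_cat_nat jj1 (leqW j1t)) /= big_nat_cond big1 ?add0n; last first.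
    move=> i /andP[/andP[hi0 hi] _]; rewrite /binom_shift.
    by have -> : (i < s.+1) = true by move: hi0 hi; rewrite /j1; clear; lia.
  apply: eq_leq; apply: eq_big_nat => i hi; rewrite /binom_shift.
  have -> : (i < s.+1) = false by move: hi; rewrite /j1; clear; lia.
  congr 'C(_, _); move: hi; rewrite /j1; clear; lia.
Qed.

End Final.

Theorem lemma2p9 (n k : nat) (Q : {set {set 'I_n}}) (j : nat) (q : nat -> nat) :
  5 <= 2 * k + 1 -> 2 * k + 1 <= n ->
  kvertices k Q -> kindependent Q ->
  1 <= j -> j <= q j -> j <= n - k ->
  (forall i, j <= i < n - k -> q i < q i.+1) ->
  #|Q| = \sum_(j <= i < (n - k).+1) 'C(q i, i) ->
  \sum_(j <= i < (n - k).+1) binom_shift (q i) i (n - 2 * k) <= #|kneighborhood k Q|.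
Proof.
move=> hk hn kv ind j1 jq jt inc cQ.
set Qc := [set ~: A | A in Q].
have cQc : #|Qc| = #|Q| by rewrite card_imset //; apply: setC_inj.
have un : unif (n - k) Qc.
  move=> C /imsetP[A AQ ->]; have := cardsC A; rewrite card_ord.
  have := kv A AQ; rewrite /kvertex => /eqP ->; clear; lia.
have vq : valid (n - k) j q by split.
have := iter_bound un vq (etrans cQc cQ) (_ : n - 2 * k <= n - k).
move=> /(_ _)/Wrap[]; first by clear; lia.
have -> : n - k - (n - 2 * k) = k by move: hn; clear; lia.
move=> h; apply: leq_trans h _; apply: subset_leq_card; apply/subsetP=> B.
rewrite !inE => /andP[cB /exists_inP[C /imsetP[A AQ ->] BC]].
have dAB : kadj A B by rewrite /kadj disjoint_sym disjoints_subset.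
rewrite /kvertex cB /=; apply/andP; split.
  by apply/negP=> BQ; have := ind A B AQ BQ; rewrite dAB.
by apply/exists_inP; exists A.
Qed.
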